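(* Let $a>0$, $\alpha\in[0,1)$ and $f\in\mathcal C_a$. The function $\mathrm{Sh}_\alpha(f)$ is differentiable on $(-\infty,s_\alpha)$ and $\mathrm{Sh}_\alpha(f)'(x)<\alpha$ for every $x\in(-\infty,s_\alpha)$.
   Context: $\mathcal C_a$ is the set of $C^1$ functions $f:\mathbb R\to\mathbb R$ that are even, satisfy $f(s)=|s|$ for $|s|\ge a$ and are strictly convex on $[-a,a]$. For $f\in\mathcal C_a$: $F_\alpha(s)=f(s)-\alpha s$, $x_\alpha^+=(f')^{-1}(\alpha)\in[0,a)$ (inverse of $f':[-a,a]\to[-1,1]$); $F_\alpha$ decreases on $(-\infty,x_\alpha^+]$ and increases on $[x_\alpha^+,\infty)$. Let $F_\alpha^{-1}$ be the inverse of $F_\alpha|_{[x_\alpha^+,\infty)}$, $\phi=F_\alpha^{-1}\circ F_\alpha$, $\delta_x=(1-\alpha)^{-1}F_\alpha(x)-\phi(x)$, $s_\alpha=x_\alpha^++\delta_{x_\alpha^+}$; $x\mapsto x+\delta_x$ is an increasing bijection $(-\infty,x_\alpha^+]\to(-\infty,s_\alpha]$ with inverse $\tau$. Define $\mathrm{Sh}_\alpha(f)(x)=\alpha x+F_\alpha(\tau(x))$ for $x\le s_\alpha$ and $=x$ for $x>s_\alpha$. *)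

(* Defs.v *)
From Stdlib Require Import Reals Lra ClassicalEpsilon.
From Coquelicot Require Import Coquelicot.
Open Scope R_scope.

Definition C1 (f : R -> R) : Prop :=
  (forall x, ex_derive f x) /\ (forall x, continuous (Derive f) x).

Definition strictly_convex_on (f : R -> R) (lo hi : R) : Prop :=
  forall x y t, lo <= x <= hi -> lo <= y <= hi -> x <> y -> 0 < t < 1 ->
    f (t * x + (1 - t) * y) < t * f x + (1 - t) * f y.

Definition in_Ca (a : R) (f : R -> R) : Prop :=
  C1 f /\ (forall s, f (- s) = f s) /\
  (forall s, a <= Rabs s -> f s = Rabs s) /\
  strictly_convex_on f (- a) a.

Definition Falpha (f : R -> R) (alpha : R) (s : R) : R := f s - alpha * s.

Definition xplus (a : R) (f : R -> R) (alpha : R) : R :=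
  epsilon (inhabits 0) (fun x => - a <= x <= a /\ Derive f x = alpha).

Definition Finv (a : R) (f : R -> R) (alpha : R) (y : R) : R :=
  epsilon (inhabits 0)
    (fun z => xplus a f alpha <= z /\ Falpha f alpha z = y).

Definition phi (a : R) (f : R -> R) (alpha : R) (x : R) : R :=
  Finv a f alpha (Falpha f alpha x).

Definition delta (a : R) (f : R -> R) (alpha : R) (x : R) : R :=
  / (1 - alpha) * Falpha f alpha x - phi a f alpha x.

Definition s_alpha (a : R) (f : R -> R) (alpha : R) : R :=
  xplus a f alpha + delta a f alpha (xplus a f alpha).

Definition tau (a : R) (f : R -> R) (alpha : R) (y : R) : R :=
  epsilon (inhabits 0)
    (fun x => x <= xplus a f alpha /\ x + delta a f alpha x = y).

Definition Sh (a : R) (f : R -> R) (alpha : R) (x : R) : R :=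
  if Rle_dec x (s_alpha a f alpha)
  then alpha * x + Falpha f alpha (tau a f alpha x)
  else x.

(* Main.v *)
Require Import Defs.
From Stdlib Require Import Reals Lra ClassicalEpsilon.
From Coquelicot Require Import Coquelicot.
Open Scope R_scope.
Lemma loc_ball x (P : R -> Prop) d : 0 < d -> (forall y, Rabs (y - x) < d -> P y) -> locally x P.
Proof. intros Hd H. exists (mkposreal d Hd). intros y Hy. apply H. exact Hy. Qed.
Lemma cont_eps (g : R -> R) x : continuous g x -> forall eps, 0 < eps -> exists d, 0 < d /\ forall y, Rabs (y - x) < d -> Rabs (g y - g x) < eps.
Proof.
  intros H eps He. apply continuity_pt_filterlim in H.
  unfold continuity_pt, continue_in, limit1_in, limit_in in H. simpl in H.
  destruct (H eps He) as [d [Hd Hy]]. exists d. split; auto.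
  intros y Hy'. destruct (Req_dec y x) as [->|Hne].
  - unfold Rminus; rewrite Rplus_opp_r, Rabs_R0; auto.
  - apply Hy. split. split. exact I. auto. exact Hy'.
Qed.

Lemma cont_const (g : R -> R) x0 c : continuous g x0 ->
  (forall d, 0 < d -> exists t, Rabs (t - x0) < d /\ g t = c) -> g x0 = c.
Proof.
  intros Hc H. destruct (Req_dec (g x0) c) as [|Hne]; auto. exfalso.
  assert (He : 0 < Rabs (g x0 - c)) by (apply Rabs_pos_lt; lra).
  destruct (cont_eps g x0 Hc _ He) as [d [Hd Hy]].
  destruct (H d Hd) as [t [Ht Hgt]]. specialize (Hy t Ht). rewrite Hgt in Hy.
  rewrite <- Rabs_Ropp in Hy. replace (- (c - g x0)) with (g x0 - c) in Hy by ring. lra.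
Qed.

Lemma tangent_le (g : R -> R) x k c d : is_derive g x d ->
  (forall t, 0 < t < 1 -> g (x + t * k) - g x <= t * c) -> d * k <= c.
Proof.
  intros Hd H. apply is_derive_Reals in Hd.
  destruct (Rle_dec (d*k) c) as [|Hn]; auto. exfalso. apply Rnot_le_lt in Hn.
  destruct (Req_dec k 0) as [->|Hk].
  { specialize (H (1/2) ltac:(lra)). rewrite Rmult_0_r, Rplus_0_r in H. lra. }
  assert (Hka : 0 < Rabs k) by (apply Rabs_pos_lt; auto).
  set (eps := (d*k - c) / (2 * Rabs k)).
  assert (He : 0 < eps) by (unfold eps; apply Rdiv_lt_0_compat; lra).
  destruct (Hd eps He) as [del Hdel].
  set (t := Rmin (1/2) (del / (2 * Rabs k))).
  assert (Ht0 : 0 < t) by (unfold t; apply Rmin_pos; [lra| apply Rdiv_lt_0_compat; [apply cond_pos|lra]]).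
  assert (Ht1 : t <= 1/2) by apply Rmin_l.
  assert (Ht2 : t <= del / (2 * Rabs k)) by apply Rmin_r.
  assert (Hh : t * k <> 0) by (apply Rmult_integral_contrapositive; split; lra).
  assert (Habs : Rabs (t*k) < del).
  { rewrite Rabs_mult, (Rabs_pos_eq t) by lra.
    assert (t * Rabs k <= del / 2).
    { apply Rmult_le_compat_r with (r := Rabs k) in Ht2; [|lra].
      replace (del / (2 * Rabs k) * Rabs k) with (del/2) in Ht2. lra. field. lra. }
    pose proof (cond_pos del). lra. }
  specialize (Hdel (t*k) Hh Habs).
  set (A := g (x + t*k) - g x) in *.
  assert (HA : Rabs (A - d * (t*k)) < eps * Rabs (t*k)).
  { replace (A - d*(t*k)) with ((A/(t*k) - d) * (t*k)) by (field; split; [exact Hk|lra]).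
    rewrite Rabs_mult. apply Rmult_lt_compat_r. apply Rabs_pos_lt; auto.
    unfold A; exact Hdel. }
  rewrite Rabs_mult, (Rabs_pos_eq t) in HA by lra.
  replace (eps * (t * Rabs k)) with (t * (d*k - c) / 2) in HA by (unfold eps; field; lra).
  apply Rabs_def2 in HA. destruct HA as [HA1 HA2].
  specialize (H t ltac:(lra)). fold A in H.
  assert (t * c < t * (d * k)) by (apply Rmult_lt_compat_l; lra).
  nra.
Qed.

Lemma inv_close q l eps : l <> 0 -> 0 < eps ->
  Rabs (q - l) < Rmin (Rabs l / 2) (eps * Rabs l * Rabs l / 2) -> Rabs (/ q - / l) < eps.
Proof.
  intros Hl He H.
  assert (H1 := Rlt_le_trans _ _ _ H (Rmin_l _ _)).
  assert (H2 := Rlt_le_trans _ _ _ H (Rmin_r _ _)).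
  assert (Hla : 0 < Rabs l) by (apply Rabs_pos_lt; auto).
  assert (Hq : Rabs l / 2 < Rabs q).
  { pose proof (Rabs_triang_inv l q). rewrite <- Rabs_Ropp in H1.
    replace (- (q - l)) with (l - q) in H1 by ring. lra. }
  assert (Hq0 : q <> 0) by (intro; subst; rewrite Rabs_R0 in Hq; lra).
  replace (/q - /l) with ((l - q) * / (q * l)) by (field; auto).
  rewrite Rabs_mult, Rabs_inv, Rabs_mult.
  assert (Hql : 0 < Rabs q * Rabs l) by nra.
  apply Rmult_lt_reg_r with (r := Rabs q * Rabs l); auto.
  rewrite Rmult_assoc, Rinv_l by lra. rewrite Rmult_1_r.
  rewrite <- Rabs_Ropp. replace (- (l - q)) with (q - l) by ring.
  assert (eps * Rabs l * Rabs l / 2 < eps * (Rabs q * Rabs l)).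
  { assert (eps * Rabs l * (Rabs l / 2) < eps * Rabs l * Rabs q) by (apply Rmult_lt_compat_l; nra). nra. }
  lra.
Qed.

Lemma incr_glob (g : R -> R) (Hd : forall x, ex_derive g x) x y : x < y ->
  (forall c, x < c < y -> 0 < Derive g c) -> g x < g y.
Proof.
  intros Hxy H.
  destruct (MVT_cor1 g x y (fun t => ex_derive_Reals_0 g t (Hd t)) Hxy) as [c [Hc Hc2]].
  rewrite Derive_Reals in Hc. specialize (H c Hc2). nra.
Qed.

Lemma decr_glob (g : R -> R) (Hd : forall x, ex_derive g x) x y : x < y ->
  (forall c, x < c < y -> Derive g c < 0) -> g y < g x.
Proof.
  intros Hxy H.
  destruct (MVT_cor1 g x y (fun t => ex_derive_Reals_0 g t (Hd t)) Hxy) as [c [Hc Hc2]].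
  rewrite Derive_Reals in Hc. specialize (H c Hc2). nra.
Qed.

Lemma incr_loc (g : R -> R) x y : x < y ->
  (forall c, x <= c <= y -> ex_derive g c /\ 0 < Derive g c) -> g x < g y.
Proof.
  intros Hxy H.
  destruct (MVT_gen g x y (Derive g)) as [c [Hc Hc2]].
  - intros t Ht. rewrite Rmin_left, Rmax_right in Ht by lra.
    apply Derive_correct. apply H; lra.
  - intros t Ht. rewrite Rmin_left, Rmax_right in Ht by lra.
    apply continuity_pt_filterlim. apply (ex_derive_continuous (K:=R_AbsRing) (V:=R_NormedModule)). apply H; lra.
  - rewrite Rmin_left, Rmax_right in Hc by lra. specialize (H c Hc). nra.
Qed.

Lemma inv_deriv (I E : R -> Prop) (f h : R -> R) (y0 l : R) :
  (forall x y, I x -> I y -> x < y -> f x < f y) ->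
  (forall y, E y -> I (h y) /\ f (h y) = y) ->
  (forall x, I x -> E (f x)) ->
  (exists r, 0 < r /\ forall x, Rabs (x - h y0) < r -> I x) ->
  (exists r, 0 < r /\ forall y, Rabs (y - y0) < r -> E y) ->
  is_derive f (h y0) l -> l <> 0 ->
  is_derive h y0 (/ l).
Proof.
  intros Hmono Hfh HE [r1 [Hr1 HI1]] [r2 [Hr2 HE2]] Hd Hl.
  assert (HEy0 : E y0) by (apply HE2; unfold Rminus; rewrite Rplus_opp_r, Rabs_R0; auto).
  set (x0 := h y0) in *.
  destruct (Hfh y0 HEy0) as [HIx0 Hfx0]. fold x0 in HIx0, Hfx0.
  assert (Hhf : forall x, I x -> h (f x) = x).
  { intros x Hx. destruct (Hfh (f x) (HE x Hx)) as [H1 H2].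
    destruct (Rtotal_order (h (f x)) x) as [Hlt|[Heq|Hgt]]; auto.
    - specialize (Hmono _ _ H1 Hx Hlt). lra.
    - specialize (Hmono _ _ Hx H1 Hgt). lra. }
  assert (Hhm : forall y1 y2, E y1 -> E y2 -> y1 < y2 -> h y1 < h y2).
  { intros y1 y2 H1 H2 H12. destruct (Hfh y1 H1) as [A1 B1]. destruct (Hfh y2 H2) as [A2 B2].
    destruct (Rtotal_order (h y1) (h y2)) as [Hlt|[Heq|Hgt]]; auto.
    - rewrite Heq in B1. lra.
    - specialize (Hmono _ _ A2 A1 Hgt). lra. }
  assert (Hcont : forall eps, 0 < eps -> exists del, 0 < del /\
             forall y, Rabs (y - y0) < del -> Rabs (h y - x0) < eps).
  { intros eps He. set (e := Rmin (eps/2) (r1/2)).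
    assert (He0 : 0 < e) by (apply Rmin_pos; lra).
    assert (He1 : e <= eps/2) by apply Rmin_l. assert (He2 : e <= r1/2) by apply Rmin_r.
    assert (Ia : I (x0 - e)) by (apply HI1; replace (x0 - e - x0) with (-e) by ring; rewrite Rabs_Ropp, Rabs_pos_eq; lra).
    assert (Ib : I (x0 + e)) by (apply HI1; replace (x0 + e - x0) with e by ring; rewrite Rabs_pos_eq; lra).
    assert (Ha : f (x0 - e) < y0) by (rewrite <- Hfx0; apply Hmono; auto; lra).
    assert (Hb : y0 < f (x0 + e)) by (rewrite <- Hfx0; apply Hmono; auto; lra).
    exists (Rmin (Rmin (y0 - f (x0 - e)) (f (x0 + e) - y0)) r2).
    split. { apply Rmin_pos; [apply Rmin_pos|]; lra. }
    intros y Hy.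
    pose proof (Rmin_l (Rmin (y0 - f (x0 - e)) (f (x0 + e) - y0)) r2).
    pose proof (Rmin_r (Rmin (y0 - f (x0 - e)) (f (x0 + e) - y0)) r2).
    pose proof (Rmin_l (y0 - f (x0 - e)) (f (x0 + e) - y0)).
    pose proof (Rmin_r (y0 - f (x0 - e)) (f (x0 + e) - y0)).
    assert (HEy : E y) by (apply HE2; lra).
    apply Rabs_def2 in Hy. destruct Hy.
    assert (h (f (x0 - e)) < h y) by (apply Hhm; auto; lra).
    assert (h y < h (f (x0 + e))) by (apply Hhm; auto; lra).
    rewrite (Hhf _ Ia), (Hhf _ Ib) in *. apply Rabs_def1; lra. }
  apply is_derive_Reals in Hd. apply is_derive_Reals.
  intros eps He.
  assert (Hla : 0 < Rabs l) by (apply Rabs_pos_lt; auto).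
  set (eta := Rmin (Rabs l / 2) (eps * Rabs l * Rabs l / 2)).
  assert (Heta : 0 < eta) by (apply Rmin_pos; [lra| apply Rdiv_lt_0_compat; [repeat apply Rmult_lt_0_compat; auto|lra]]).
  destruct (Hd eta Heta) as [d1 Hd1].
  destruct (Hcont d1 (cond_pos d1)) as [d2 [Hd2 Hc2]].
  assert (Hdp : 0 < Rmin d2 r2) by (apply Rmin_pos; lra).
  exists (mkposreal _ Hdp). simpl. intros hh Hh0 Hhh.
  pose proof (Rmin_l d2 r2). pose proof (Rmin_r d2 r2).
  set (y := y0 + hh).
  assert (HEy : E y) by (apply HE2; unfold y; replace (y0 + hh - y0) with hh by ring; lra).
  destruct (Hfh y HEy) as [HIy Hfy].
  set (u := h y - x0).
  assert (Hu : Rabs u < d1) by (apply Hc2; unfold y; replace (y0 + hh - y0) with hh by ring; lra).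
  assert (Hu0 : u <> 0).
  { intro Hu0. unfold u in Hu0. assert (Hyx : h y = x0) by lra. rewrite Hyx in Hfy. unfold y in Hfy. lra. }
  specialize (Hd1 u Hu0 Hu).
  replace (x0 + u) with (h y) in Hd1 by (unfold u; ring).
  rewrite Hfy, Hfx0 in Hd1. unfold y in Hd1.
  replace (y0 + hh - y0) with hh in Hd1 by ring.
  fold x0. fold y.
  replace ((h y - x0) / hh) with (/ (hh / u)).
  - apply inv_close; auto.
  - unfold u. field. split; auto.
Qed.

Lemma f_der_pos a f : 0 < a -> in_Ca a f -> forall t, a < t -> is_derive f t 1.
Proof.
  intros Ha [HC [Hev [Habs Hcv]]] t Ht.
  apply is_derive_ext_loc with (f := fun u => u); [|apply (is_derive_id (K:=R_AbsRing))].
  apply loc_ball with (d := t - a); [lra|]. intros u Hu. apply Rabs_def2 in Hu.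
  assert (Hu' : Rabs u = u) by (apply Rabs_pos_eq; lra). cbv beta. rewrite Habs by (rewrite Hu'; lra). lra.
Qed.

Lemma f_der_neg a f : 0 < a -> in_Ca a f -> forall t, t < -a -> is_derive f t (-1).
Proof.
  intros Ha [HC [Hev [Habs Hcv]]] t Ht.
  apply is_derive_ext_loc with (f := fun u => - u).
  - apply loc_ball with (d := -a - t); [lra|]. intros u Hu. apply Rabs_def2 in Hu.
    assert (Hu' : Rabs u = - u) by (apply Rabs_left; lra). cbv beta. rewrite Habs by (rewrite Hu'; lra). lra.
  - apply (is_derive_opp (K:=R_AbsRing) (fun u => u)). apply (is_derive_id (K:=R_AbsRing)).
Qed.

Lemma D_cont a f : in_Ca a f -> forall x, continuous (Derive f) x.
Proof. intros [[_ H] _]. exact H. Qed.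

Lemma f_ex a f : in_Ca a f -> forall x, ex_derive f x.
Proof. intros [[H _] _]. exact H. Qed.

Lemma D_at_a a f : 0 < a -> in_Ca a f -> Derive f a = 1 /\ Derive f (-a) = -1.
Proof.
  intros Ha Hf. split.
  - apply cont_const. apply (D_cont a f Hf).
    intros d Hd. exists (a + d/2). split.
    + replace (a + d/2 - a) with (d/2) by ring. rewrite Rabs_pos_eq; lra.
    + apply is_derive_unique. apply (f_der_pos a f Ha Hf). lra.
  - apply cont_const. apply (D_cont a f Hf).
    intros d Hd. exists (-a - d/2). split.
    + replace (-a - d/2 - -a) with (-(d/2)) by ring. rewrite Rabs_Ropp, Rabs_pos_eq; lra.
    + apply is_derive_unique. apply (f_der_neg a f Ha Hf). lra.
Qed.

Lemma D_strict a f : in_Ca a f -> forall x y, -a <= x -> x < y -> y <= a ->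
  Derive f x < Derive f y.
Proof.
  intros Hf x y Hx Hxy Hy. pose proof Hf as [HC [Hev [Habs Hcv]]].
  set (m := (x + y) / 2).
  assert (Hmid : f m < (f x + f y) / 2).
  { unfold m. replace ((x+y)/2) with (1/2 * x + (1 - 1/2) * y) by field.
    replace ((f x + f y)/2) with (1/2 * f x + (1 - 1/2) * f y) by field.
    apply Hcv; lra. }
  assert (H1 : Derive f x * (m - x) <= f m - f x).
  { apply tangent_le with (g := f) (x := x). apply Derive_correct, (f_ex a f Hf).
    intros t Ht. replace (x + t * (m - x)) with (t * m + (1 - t) * x) by ring.
    assert (f (t * m + (1 - t) * x) < t * f m + (1 - t) * f x) by (apply Hcv; unfold m; lra).
    lra. }
  assert (H2 : Derive f y * (m - y) <= f m - f y).
  { apply tangent_le with (g := f) (x := y). apply Derive_correct, (f_ex a f Hf).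
    intros t Ht. replace (y + t * (m - y)) with (t * m + (1 - t) * y) by ring.
    assert (f (t * m + (1 - t) * y) < t * f m + (1 - t) * f y) by (apply Hcv; unfold m; lra).
    lra. }
  unfold m in *. nra.
Qed.

Lemma D_le1 a f : 0 < a -> in_Ca a f -> forall t, Derive f t <= 1.
Proof.
  intros Ha Hf t. destruct (D_at_a a f Ha Hf) as [Da Dma].
  destruct (Rlt_dec a t).
  - rewrite (is_derive_unique _ _ _ (f_der_pos a f Ha Hf t r)). lra.
  - destruct (Rlt_dec t (-a)).
    + rewrite (is_derive_unique _ _ _ (f_der_neg a f Ha Hf t r)). lra.
    + destruct (Req_dec t a) as [->|Hne]; [lra|].
      rewrite <- Da. left. apply (D_strict a f Hf); lra.
Qed.

Lemma xp_spec a f alpha : 0 < a -> 0 <= alpha < 1 -> in_Ca a f ->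
  -a <= xplus a f alpha <= a /\ Derive f (xplus a f alpha) = alpha.
Proof.
  intros Ha Hal Hf. unfold xplus.
  apply (epsilon_spec (inhabits 0) (fun x => - a <= x <= a /\ Derive f x = alpha)).
  destruct (D_at_a a f Ha Hf) as [Da Dma].
  destruct (IVT_gen (Derive f) (-a) a alpha) as [x [Hx1 Hx2]].
  - intro x. apply continuity_pt_filterlim. apply (D_cont a f Hf).
  - rewrite Da, Dma. rewrite Rmin_left, Rmax_right by lra. lra.
  - exists x. rewrite Rmin_left, Rmax_right in Hx1 by lra. auto.
Qed.

Lemma D_lt a f alpha : 0 < a -> 0 <= alpha < 1 -> in_Ca a f ->
  forall t, t < xplus a f alpha -> Derive f t < alpha.
Proof.
  intros Ha Hal Hf t Ht. destruct (xp_spec a f alpha Ha Hal Hf) as [Hx Hd].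
  destruct (Rlt_dec t (-a)).
  - rewrite (is_derive_unique _ _ _ (f_der_neg a f Ha Hf t r)). lra.
  - rewrite <- Hd. apply (D_strict a f Hf); lra.
Qed.

Lemma D_gt a f alpha : 0 < a -> 0 <= alpha < 1 -> in_Ca a f ->
  forall t, xplus a f alpha < t -> alpha < Derive f t.
Proof.
  intros Ha Hal Hf t Ht. destruct (xp_spec a f alpha Ha Hal Hf) as [Hx Hd].
  destruct (Rlt_dec a t).
  - rewrite (is_derive_unique _ _ _ (f_der_pos a f Ha Hf t r)). lra.
  - rewrite <- Hd. apply (D_strict a f Hf); lra.
Qed.

Lemma F_der a f alpha : in_Ca a f -> forall t,
  is_derive (Falpha f alpha) t (Derive f t - alpha).
Proof.
  intros Hf t. unfold Falpha. auto_derive.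
  - apply (f_ex a f Hf).
  - unfold Rminus. rewrite Rmult_1_l, Rmult_1_r. reflexivity.
Qed.

Lemma F_ex a f alpha : in_Ca a f -> forall t, ex_derive (Falpha f alpha) t.
Proof. intros Hf t. eexists. apply (F_der a f alpha Hf). Qed.

Lemma F_dD a f alpha : in_Ca a f -> forall t, Derive (Falpha f alpha) t = Derive f t - alpha.
Proof. intros Hf t. apply is_derive_unique, (F_der a f alpha Hf). Qed.

Lemma F_cont a f alpha : in_Ca a f -> forall t, continuous (Falpha f alpha) t.
Proof. intros Hf t. apply (ex_derive_continuous (K:=R_AbsRing) (V:=R_NormedModule)), (F_ex a f alpha Hf). Qed.

Lemma F_incr a f alpha : 0 < a -> 0 <= alpha < 1 -> in_Ca a f ->
  forall x y, xplus a f alpha <= x -> x < y -> Falpha f alpha x < Falpha f alpha y.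
Proof.
  intros Ha Hal Hf x y Hx Hxy. apply incr_glob; auto. apply (F_ex a f alpha Hf).
  intros c Hc. rewrite (F_dD a f alpha Hf).
  assert (alpha < Derive f c) by (apply (D_gt a f alpha Ha Hal Hf); lra). lra.
Qed.

Lemma F_decr a f alpha : 0 < a -> 0 <= alpha < 1 -> in_Ca a f ->
  forall x y, x < y -> y <= xplus a f alpha -> Falpha f alpha y < Falpha f alpha x.
Proof.
  intros Ha Hal Hf x y Hxy Hy. apply decr_glob; auto. apply (F_ex a f alpha Hf).
  intros c Hc. rewrite (F_dD a f alpha Hf).
  assert (Derive f c < alpha) by (apply (D_lt a f alpha Ha Hal Hf); lra). lra.
Qed.

Lemma F_big a f alpha : 0 < a -> in_Ca a f -> forall s, a <= s -> Falpha f alpha s = (1 - alpha) * s.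
Proof.
  intros Ha [_ [_ [Habs _]]] s Hs. unfold Falpha.
  rewrite Habs; rewrite Rabs_pos_eq; try lra. 
Qed.

Lemma F_neg a f alpha : 0 < a -> in_Ca a f -> forall s, s <= -a -> Falpha f alpha s = - (1 + alpha) * s.
Proof.
  intros Ha [_ [_ [Habs _]]] s Hs. unfold Falpha.
  assert (Rabs s = - s) by (apply Rabs_left; lra).
  rewrite Habs; rewrite H; lra.
Qed.

Lemma Finv_spec a f alpha : 0 < a -> 0 <= alpha < 1 -> in_Ca a f ->
  forall y, Falpha f alpha (xplus a f alpha) <= y ->
  xplus a f alpha <= Finv a f alpha y /\ Falpha f alpha (Finv a f alpha y) = y.
Proof.
  intros Ha Hal Hf y Hy. unfold Finv.
  apply (epsilon_spec (inhabits 0) (fun z => xplus a f alpha <= z /\ Falpha f alpha z = y)).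
  set (xp := xplus a f alpha) in *.
  set (M := Rmax a (Rmax xp (y / (1 - alpha)))).
  assert (HM1 : a <= M) by apply Rmax_l.
  assert (HM2 : xp <= M) by (eapply Rle_trans; [apply Rmax_l|apply Rmax_r]).
  assert (HM3 : y / (1 - alpha) <= M) by (eapply Rle_trans; [apply Rmax_r|apply Rmax_r]).
  assert (HFM : y <= Falpha f alpha M).
  { rewrite (F_big a f alpha Ha Hf) by lra.
    apply Rmult_le_compat_l with (r := 1 - alpha) in HM3; [|lra].
    replace ((1 - alpha) * (y / (1 - alpha))) with y in HM3 by (field; lra). lra. }
  destruct (IVT_gen (Falpha f alpha) xp M y) as [z [Hz1 Hz2]].
  - intro x. apply continuity_pt_filterlim, (F_cont a f alpha Hf).
  - rewrite Rmin_left, Rmax_right by lra. lra.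
  - exists z. rewrite Rmin_left in Hz1 by lra. split; [lra|auto].
Qed.

Lemma Finv_F a f alpha : 0 < a -> 0 <= alpha < 1 -> in_Ca a f ->
  forall z, xplus a f alpha <= z -> Finv a f alpha (Falpha f alpha z) = z.
Proof.
  intros Ha Hal Hf z Hz.
  assert (HF : Falpha f alpha (xplus a f alpha) <= Falpha f alpha z).
  { destruct (Req_dec z (xplus a f alpha)) as [->|]; [lra|].
    left. apply (F_incr a f alpha Ha Hal Hf); lra. }
  destruct (Finv_spec a f alpha Ha Hal Hf _ HF) as [H1 H2].
  set (w := Finv a f alpha (Falpha f alpha z)) in *.
  destruct (Rtotal_order w z) as [Hlt|[Heq|Hgt]]; auto.
  - pose proof (F_incr a f alpha Ha Hal Hf w z H1 Hlt). lra.
  - pose proof (F_incr a f alpha Ha Hal Hf z w Hz Hgt). lra.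
Qed.

Lemma phi_spec a f alpha : 0 < a -> 0 <= alpha < 1 -> in_Ca a f ->
  forall t, t < xplus a f alpha ->
  xplus a f alpha < phi a f alpha t /\ Falpha f alpha (phi a f alpha t) = Falpha f alpha t.
Proof.
  intros Ha Hal Hf t Ht.
  pose proof (F_decr a f alpha Ha Hal Hf t _ Ht (Rle_refl _)) as HF.
  destruct (Finv_spec a f alpha Ha Hal Hf (Falpha f alpha t)) as [H1 H2]; [lra|].
  unfold phi. split; auto.
  destruct H1 as [|H1]; auto. rewrite <- H1 in H2. lra.
Qed.

Lemma phi_xp a f alpha : 0 < a -> 0 <= alpha < 1 -> in_Ca a f ->
  phi a f alpha (xplus a f alpha) = xplus a f alpha.
Proof. intros Ha Hal Hf. unfold phi. apply Finv_F; auto; lra. Qed.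

Lemma phi_far a f alpha : 0 < a -> 0 <= alpha < 1 -> in_Ca a f ->
  forall t, t <= -a -> phi a f alpha t = Falpha f alpha t / (1 - alpha).
Proof.
  intros Ha Hal Hf t Ht.
  destruct (xp_spec a f alpha Ha Hal Hf) as [Hx _].
  rewrite (F_neg a f alpha Ha Hf t Ht).
  set (z := - (1 + alpha) * t / (1 - alpha)).
  assert (Hz : a <= z).
  { unfold z. apply Rmult_le_reg_r with (r := 1 - alpha); [lra|].
    replace (- (1 + alpha) * t / (1 - alpha) * (1 - alpha)) with (- (1 + alpha) * t) by (field; lra).
    nra. }
  assert (HFz : Falpha f alpha z = - (1 + alpha) * t).
  { rewrite (F_big a f alpha Ha Hf) by lra. unfold z. field. lra. }
  unfold phi. rewrite (F_neg a f alpha Ha Hf t Ht), <- HFz.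
  apply Finv_F; auto. lra.
Qed.

Lemma phi_der a f alpha : 0 < a -> 0 <= alpha < 1 -> in_Ca a f ->
  forall t, t < xplus a f alpha ->
  is_derive (phi a f alpha) t
    ((Derive f t - alpha) * / (Derive f (phi a f alpha t) - alpha)).
Proof.
  intros Ha Hal Hf t Ht.
  destruct (phi_spec a f alpha Ha Hal Hf t Ht) as [Hp1 Hp2].
  assert (HD : alpha < Derive f (phi a f alpha t)) by (apply (D_gt a f alpha Ha Hal Hf); auto).
  assert (HFt : Falpha f alpha (xplus a f alpha) < Falpha f alpha t) by (apply (F_decr a f alpha Ha Hal Hf); lra).
  assert (Hinv : is_derive (Finv a f alpha) (Falpha f alpha t) (/ (Derive f (phi a f alpha t) - alpha))).
  { apply (inv_deriv (fun x => (xplus a f alpha) < x) (fun y => Falpha f alpha (xplus a f alpha) < y) (Falpha f alpha)).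
    - intros x y Hx Hy Hxy. apply (F_incr a f alpha Ha Hal Hf); lra.
    - intros y Hy. destruct (Finv_spec a f alpha Ha Hal Hf y) as [H1 H2]; [lra|].
      split; auto. destruct H1 as [|H1]; auto. rewrite <- H1 in H2. lra.
    - intros x Hx. apply (F_incr a f alpha Ha Hal Hf); lra.
    - exists (phi a f alpha t - (xplus a f alpha)). split; [lra|]. intros x Hx. apply Rabs_def2 in Hx.
      change (Finv a f alpha (Falpha f alpha t)) with (phi a f alpha t) in Hx. lra.
    - exists (Falpha f alpha t - Falpha f alpha (xplus a f alpha)). split; [lra|]. intros y Hy.
      apply Rabs_def2 in Hy. lra.
    - apply (F_der a f alpha Hf).
    - lra. }
  exact (is_derive_comp (K:=R_AbsRing) (V:=R_NormedModule) (Finv a f alpha) (Falpha f alpha) t _ _ Hinv (F_der a f alpha Hf t)).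
Qed.

Definition Gf a f alpha t := t + delta a f alpha t.
Definition Gd a f alpha t := 1 + (/ (1 - alpha) * (Derive f t - alpha)
   - (Derive f t - alpha) * / (Derive f (phi a f alpha t) - alpha)).

Lemma G_der a f alpha : 0 < a -> 0 <= alpha < 1 -> in_Ca a f ->
  forall t, t < xplus a f alpha -> is_derive (Gf a f alpha) t (Gd a f alpha t).
Proof.
  intros Ha Hal Hf t Ht. unfold Gf, Gd, delta.
  apply (is_derive_plus (K:=R_AbsRing) (V:=R_NormedModule) (fun u => u)).
  - apply (is_derive_id (K:=R_AbsRing)).
  - apply (is_derive_minus (K:=R_AbsRing) (V:=R_NormedModule) (fun u => / (1 - alpha) * Falpha f alpha u)).
    + apply is_derive_scal. apply (F_der a f alpha Hf).
    + apply (phi_der a f alpha Ha Hal Hf t Ht).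
Qed.

Lemma Gd_ge1 a f alpha : 0 < a -> 0 <= alpha < 1 -> in_Ca a f ->
  forall t, t < xplus a f alpha -> 1 <= Gd a f alpha t.
Proof.
  intros Ha Hal Hf t Ht. unfold Gd.
  destruct (phi_spec a f alpha Ha Hal Hf t Ht) as [Hp1 Hp2].
  assert (HD : alpha < Derive f (phi a f alpha t)) by (apply (D_gt a f alpha Ha Hal Hf); auto).
  assert (HD1 : Derive f (phi a f alpha t) <= 1) by apply (D_le1 a f Ha Hf).
  assert (Hu : Derive f t < alpha) by (apply (D_lt a f alpha Ha Hal Hf); auto).
  set (u := Derive f t - alpha) in *. set (v := Derive f (phi a f alpha t) - alpha) in *.
  assert (Hu' : u < 0) by (unfold u; lra).
  assert (Hinv : / (1 - alpha) <= / v) by (apply Rinv_le_contravar; unfold v; lra).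
  assert (0 <= (- u) * (/ v - / (1 - alpha))) by (apply Rmult_le_pos; lra).
  nra.
Qed.

Lemma G_incr a f alpha : 0 < a -> 0 <= alpha < 1 -> in_Ca a f ->
  forall x y, x < y -> y < xplus a f alpha -> Gf a f alpha x < Gf a f alpha y.
Proof.
  intros Ha Hal Hf x y Hxy Hy. apply incr_loc; auto.
  intros c Hc. assert (Hc' : c < xplus a f alpha) by lra.
  pose proof (G_der a f alpha Ha Hal Hf c Hc') as HD. split.
  - eexists; exact HD.
  - rewrite (is_derive_unique _ _ _ HD). pose proof (Gd_ge1 a f alpha Ha Hal Hf c Hc'). lra.
Qed.

Lemma G_far a f alpha : 0 < a -> 0 <= alpha < 1 -> in_Ca a f ->
  forall t, t <= -a -> Gf a f alpha t = t.
Proof.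
  intros Ha Hal Hf t Ht. unfold Gf, delta. rewrite (phi_far a f alpha Ha Hal Hf t Ht). field. lra.
Qed.

Lemma G_xp a f alpha : Gf a f alpha (xplus a f alpha) = s_alpha a f alpha.
Proof. reflexivity. Qed.

Lemma G_leftcont a f alpha : 0 < a -> 0 <= alpha < 1 -> in_Ca a f ->
  forall eps, 0 < eps -> exists del, 0 < del /\ forall t, xplus a f alpha - del < t < xplus a f alpha ->
  Rabs (Gf a f alpha t - s_alpha a f alpha) < eps.
Proof.
  intros Ha Hal Hf eps Heps.
  set (F := Falpha f alpha). set (xp := xplus a f alpha).
  set (e := eps / 3).
  assert (He : 0 < e) by (unfold e; lra).
  assert (Hxe : F xp < F (xp + e)) by (apply (F_incr a f alpha Ha Hal Hf); unfold xp, e; lra).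
  set (eta := Rmin (e * (1 - alpha)) (F (xp + e) - F xp)).
  assert (Heta : 0 < eta) by (apply Rmin_pos; [unfold e; nra | lra]).
  assert (Heta1 : eta <= e * (1 - alpha)) by apply Rmin_l.
  assert (Heta2 : eta <= F (xp + e) - F xp) by apply Rmin_r.
  destruct (cont_eps F xp (F_cont a f alpha Hf xp) eta Heta) as [dF [HdF HF]].
  exists (Rmin dF e). split; [apply Rmin_pos; unfold e; lra|].
  pose proof (Rmin_l dF e). pose proof (Rmin_r dF e).
  intros t Ht.
  assert (Htx : Rabs (t - xp) < dF) by (apply Rabs_def1; lra).
  specialize (HF t Htx). apply Rabs_def2 in HF.
  destruct (phi_spec a f alpha Ha Hal Hf t (proj2 Ht)) as [Hp1 Hp2]. fold F xp in Hp1, Hp2.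
  assert (Hp3 : phi a f alpha t < xp + e).
  { destruct (Rlt_dec (phi a f alpha t) (xp + e)) as [|Hn]; auto. exfalso.
    apply Rnot_lt_le in Hn. destruct Hn as [Hn|Hn].
    - assert (F (xp + e) < F (phi a f alpha t)). { apply (F_incr a f alpha Ha Hal Hf). unfold xp; lra. lra. }
      lra.
    - rewrite <- Hn in Hp2. lra. }
  assert (Hk : 0 < / (1 - alpha)) by (apply Rinv_0_lt_compat; lra).
  assert (Hk1 : / (1 - alpha) * (e * (1 - alpha)) = e) by (field; lra).
  assert (HA : / (1 - alpha) * (F t - F xp) < e).
  { rewrite <- Hk1. apply Rmult_lt_compat_l; lra. }
  assert (HB : / (1 - alpha) * (- (F t - F xp)) < e).
  { rewrite <- Hk1. apply Rmult_lt_compat_l; lra. }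
  assert (Heq : Gf a f alpha t - s_alpha a f alpha =
     (t - xp) + / (1 - alpha) * (F t - F xp) - (phi a f alpha t - xp)).
  { assert (Hpx : phi a f alpha xp = xp) by (apply (phi_xp a f alpha Ha Hal Hf)).
    unfold Gf, s_alpha, delta. fold xp. rewrite Hpx. fold F. ring. }
  rewrite Heq. apply Rabs_def1; unfold e in *; nra.
Qed.

Lemma G_lt_s a f alpha : 0 < a -> 0 <= alpha < 1 -> in_Ca a f ->
  forall t, t < xplus a f alpha -> Gf a f alpha t < s_alpha a f alpha.
Proof.
  intros Ha Hal Hf t Ht.
  destruct (Rlt_dec (Gf a f alpha t) (s_alpha a f alpha)) as [|Hn]; auto. exfalso.
  apply Rnot_lt_le in Hn.
  set (m := (t + xplus a f alpha) / 2).
  assert (Hm : Gf a f alpha t < Gf a f alpha m) by (apply (G_incr a f alpha Ha Hal Hf); unfold m; lra).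
  destruct (G_leftcont a f alpha Ha Hal Hf (Gf a f alpha m - s_alpha a f alpha)) as [d [Hd Hc]]; [lra|].
  set (u := Rmax m (xplus a f alpha - d / 2)).
  assert (Hu1 : m <= u) by apply Rmax_l.
  assert (Hu2 : xplus a f alpha - d / 2 <= u) by apply Rmax_r.
  assert (Hu3 : u < xplus a f alpha) by (apply Rmax_lub_lt; unfold m; lra).
  assert (Hmu : Gf a f alpha m <= Gf a f alpha u).
  { destruct Hu1 as [Hu1|Hu1]; [left; apply (G_incr a f alpha Ha Hal Hf); lra|rewrite Hu1; lra]. }
  specialize (Hc u ltac:(lra)). apply Rabs_def2 in Hc. lra.
Qed.

Lemma tau_spec a f alpha : 0 < a -> 0 <= alpha < 1 -> in_Ca a f ->
  forall y, y < s_alpha a f alpha ->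
  tau a f alpha y < xplus a f alpha /\ Gf a f alpha (tau a f alpha y) = y.
Proof.
  intros Ha Hal Hf y Hy.
  destruct (xp_spec a f alpha Ha Hal Hf) as [Hx _].
  assert (Hex : exists z, z <= xplus a f alpha /\ z + delta a f alpha z = y).
  { set (t0 := Rmin y (-a) - 1).
    assert (Ht0 : t0 <= -a) by (unfold t0; pose proof (Rmin_r y (-a)); lra).
    assert (Ht0' : t0 < -a) by (unfold t0; pose proof (Rmin_r y (-a)); lra).
    assert (Ht0y : t0 < y) by (unfold t0; pose proof (Rmin_l y (-a)); lra).
    assert (HG0 : Gf a f alpha t0 = t0) by (apply G_far; auto).
    destruct (G_leftcont a f alpha Ha Hal Hf (s_alpha a f alpha - y)) as [d [Hd Hc]]; [lra|].
    set (t1 := Rmax (xplus a f alpha - d / 2) ((t0 + xplus a f alpha) / 2)).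
    assert (Ht11 : xplus a f alpha - d / 2 <= t1) by apply Rmax_l.
    assert (Ht12 : (t0 + xplus a f alpha) / 2 <= t1) by apply Rmax_r.
    assert (Ht13 : t1 < xplus a f alpha) by (apply Rmax_lub_lt; lra).
    specialize (Hc t1 ltac:(lra)). apply Rabs_def2 in Hc.
    destruct (Ranalysis5.IVT_interv (fun u => Gf a f alpha u - y) t0 t1) as [z [Hz1 Hz2]].
    - intros c Hc'.
      assert (Hed : ex_derive (fun u => Gf a f alpha u - y) c).
      { apply (ex_derive_minus (K:=R_AbsRing) (V:=R_NormedModule) (Gf a f alpha) (fun _ => y)).
        + eexists. apply (G_der a f alpha Ha Hal Hf). lra.
        + apply (ex_derive_const (K:=R_AbsRing) (V:=R_NormedModule)). }
      apply continuity_pt_filterlim. exact (ex_derive_continuous (K:=R_AbsRing) (V:=R_NormedModule) _ _ Hed).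
    - lra.
    - lra.
    - lra.
    - exists z. split; [lra|]. unfold Gf in Hz2. lra. }
  pose proof (epsilon_spec (inhabits 0) (fun x => x <= xplus a f alpha /\ x + delta a f alpha x = y) Hex) as [H1 H2].
  fold (tau a f alpha y) in H1, H2.
  split; [|exact H2].
  destruct H1 as [|H1]; auto. rewrite H1 in H2. unfold s_alpha in Hy. lra.
Qed.

Lemma tau_der a f alpha : 0 < a -> 0 <= alpha < 1 -> in_Ca a f ->
  forall x, x < s_alpha a f alpha ->
  is_derive (tau a f alpha) x (/ Gd a f alpha (tau a f alpha x)).
Proof.
  intros Ha Hal Hf x Hx.
  destruct (tau_spec a f alpha Ha Hal Hf x Hx) as [Ht1 Ht2].
  apply (inv_deriv (fun t => t < xplus a f alpha) (fun y => y < s_alpha a f alpha) (Gf a f alpha)).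
  - intros u v Hu Hv Huv. apply (G_incr a f alpha Ha Hal Hf); auto.
  - intros y Hy. apply (tau_spec a f alpha Ha Hal Hf y Hy).
  - intros u Hu. apply (G_lt_s a f alpha Ha Hal Hf u Hu).
  - exists (xplus a f alpha - tau a f alpha x). split; [lra|].
    intros u Hu. apply Rabs_def2 in Hu. lra.
  - exists (s_alpha a f alpha - x). split; [lra|]. intros u Hu. apply Rabs_def2 in Hu. lra.
  - apply (G_der a f alpha Ha Hal Hf _ Ht1).
  - pose proof (Gd_ge1 a f alpha Ha Hal Hf _ Ht1). lra.
Qed.

Theorem lemma3p20 (a alpha : R) (f : R -> R) :
  0 < a -> 0 <= alpha < 1 -> in_Ca a f ->
  forall x, x < s_alpha a f alpha ->
    ex_derive (Sh a f alpha) x /\ Derive (Sh a f alpha) x < alpha.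
Proof.
  intros Ha Hal Hf x Hx.
  destruct (tau_spec a f alpha Ha Hal Hf x Hx) as [Ht1 Ht2].
  set (t := tau a f alpha x) in *.
  set (L := alpha * 1 + / Gd a f alpha t * (Derive f t - alpha)).
  assert (HD : is_derive (Sh a f alpha) x L).
  { apply is_derive_ext_loc with (f := fun y => alpha * y + Falpha f alpha (tau a f alpha y)).
    - apply loc_ball with (d := s_alpha a f alpha - x); [lra|].
      intros y Hy. apply Rabs_def2 in Hy. unfold Sh.
      destruct (Rle_dec y (s_alpha a f alpha)); [reflexivity|lra].
    - apply (is_derive_plus (K:=R_AbsRing) (V:=R_NormedModule) (fun y => alpha * y)).
      + apply is_derive_scal. apply (is_derive_id (K:=R_AbsRing)).
      + exact (is_derive_comp (K:=R_AbsRing) (V:=R_NormedModule) (Falpha f alpha) (tau a f alpha) x _ _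
          (F_der a f alpha Hf _) (tau_der a f alpha Ha Hal Hf x Hx)). }
  split; [eexists; exact HD|].
  rewrite (is_derive_unique _ _ _ HD). unfold L.
  pose proof (Gd_ge1 a f alpha Ha Hal Hf t Ht1).
  assert (Hu : Derive f t < alpha) by (apply (D_lt a f alpha Ha Hal Hf); auto).
  assert (Hk : 0 < / Gd a f alpha t) by (apply Rinv_0_lt_compat; lra).
  assert (/ Gd a f alpha t * (Derive f t - alpha) < 0).
  { replace 0 with (/ Gd a f alpha t * 0) by ring. apply Rmult_lt_compat_l; lra. }
  lra.
Qed.
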